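(* Let $F$ be an algebraically closed field of characteristic $\neq 2$, $R=F[t]$ with the involution ${}^*$ described in the context. Let $a,b\in R$ satisfy $\gcd(a,b)=1$ and $\gcd(b,b^* )=1$. Then there exist $x,y\in R$ with $x$ even (i.e. $x^*=x$) such that $ax+by=1$.
   Context: $R=F[t]$ is the polynomial ring over $F$, and ${}^*$ is the $F$-algebra involution of $R$ that is the identity on $F$ and sends $t$ to $-t$. An element $x\in R$ is even if $x^*=x$ (equivalently $x\in F[t^2]$). *)

(* Defs.v *)
From HB Require Import structures.
From mathcomp Require Import all_boot all_order all_algebra all_field.
Set Implicit Arguments. Unset Strict Implicit. Unset Printing Implicit Defensive.
Import GRing.Theory.
Local Open Scope ring_scope.

Definition pinv (F : fieldType) (p : {poly F}) : {poly F} := p \Po (- 'X).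

Definition peven (F : fieldType) (p : {poly F}) : bool := pinv p == p.

(* Main.v *)
Require Import Defs.
From HB Require Import structures.
From mathcomp Require Import all_boot all_order all_algebra all_field.
From mathcomp Require Import ring.
Local Open Scope ring_scope.
Import GRing.Theory.

Lemma pinvM (F : fieldType) (p q : {poly F}) : pinv (p * q) = pinv p * pinv q.
Proof. exact: comp_polyM. Qed.
Lemma pinvD (F : fieldType) (p q : {poly F}) : pinv (p + q) = pinv p + pinv q.
Proof. exact: comp_polyD. Qed.
Lemma pinvC (F : fieldType) (c : F) : pinv c%:P = c%:P.
Proof. exact: comp_polyC. Qed.
Lemma pinv1 (F : fieldType) : pinv (1 : {poly F}) = 1.
Proof. by rewrite -polyC1 pinvC. Qed.
Lemma pinvK (F : fieldType) (p : {poly F}) : pinv (pinv p) = p.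
Proof.
rewrite /pinv -comp_polyA.
have -> : (- 'X : {poly F}) \Po (- 'X) = 'X.
  have hX : (- 'X : {poly F}) = (-1) *: 'X by rewrite scaleN1r.
  by rewrite {2}hX comp_polyZ comp_polyX scaleN1r opprK.
exact: comp_polyXr.
Qed.

Theorem lemma3p2 (F : closedFieldType) (hF : (2 \notin [pchar F])%N)
  (a b : {poly F}) (hab : coprimep a b) (hbb : coprimep b (pinv b)) :
  exists x y : {poly F}, peven x /\ a * x + b * y = 1.
Proof.
have h2 : (2%:R : F) != 0.
  apply/negP => h; move/negP: hF; apply; rewrite inE /=; exact: h.
case/Bezout_eq1_coprimepP: hab => -[u1 u2] /= e1.
case/Bezout_eq1_coprimepP: hbb => -[p1 p2] /= e2.
have e3 : pinv p1 * pinv b + pinv p2 * b = 1.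
  by rewrite -[b in pinv p2 * b]pinvK -!pinvM -pinvD e2 pinv1.
set c := (2%:R : F)^-1.
set x0 := u1 * p2 * pinv b + pinv u1 * p1 * b.
have sx0 : pinv x0 = pinv u1 * pinv p2 * b + u1 * pinv p1 * pinv b.
  by rewrite /x0 !(pinvD, pinvM) !pinvK.
set K := (- p1 - u2 * p2 * pinv b + a * pinv u1 * p1)
       + (- pinv p2 + a * pinv u1 * pinv p2 - u2 * pinv p1 * pinv b).
have key : a * (x0 + pinv x0) = 2%:R + b * K.
  apply/eqP; rewrite -subr_eq0; apply/eqP.
  have -> : a * (x0 + pinv x0) - (2%:R + b * K) =
    (u2 * pinv b + pinv p1 * pinv b) * (u1 * a + u2 * b - 1) * 0
    + (p2 * pinv b + pinv p1 * pinv b) * (u1 * a + u2 * b - 1)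
    + (p1 * b + p2 * pinv b - 1) + (pinv p1 * pinv b + pinv p2 * b - 1).
    rewrite sx0 /x0 /K; ring.
  by rewrite e1 e2 e3 !subrr !mulr0 !addr0.
exists (c%:P * (x0 + pinv x0)), (- (c%:P * K)); split.
  by rewrite /peven pinvM pinvC pinvD pinvK addrC.
rewrite mulrCA key mulrN (mulrCA b) mulrDr addrK -polyC_natr.
by rewrite -polyCM mulVf.
Qed.
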